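(* Let $m,n$ be integers with $0\le m<n$, let $M,N\subseteq\mathbb Z$ be finite nonempty sets, and let $U=b^m a^M$, $V=b^n a^N$ and $S=U\cup V\subseteq BS^{+}(1,3)$. If $|S|\geq 4$, then $|S^2|\geq \tfrac{7}{2}|S|-6$.
   Context: $BS(1,3)=\langle a,b\mid ab=ba^3\rangle$; $BS^{+}(1,3)=\{b^m a^x: m\in\mathbb{Z}_{\ge 0},\ x\in\mathbb{Z}\}$, with $(b^m a^x)(b^n a^y)=b^{m+n}a^{y+3^n x}$. For $A\subseteq\mathbb Z$, $b^m a^A=\{b^m a^x: x\in A\}$. $S^2=\{st: s,t\in S\}$. *)

(* Defs.v *)
From HB Require Import structures.
From mathcomp Require Import all_boot all_order all_algebra.
From mathcomp Require Import finmap.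
Set Implicit Arguments. Unset Strict Implicit. Unset Printing Implicit Defensive.
Import GRing.Theory Num.Theory.
Local Open Scope fset_scope.

(* Elements of the monoid BS^+(1,3): b^m a^x is encoded as the pair (m, x). *)
Definition BSp := (nat * int)%type.

(* (b^m a^x)(b^n a^y) = b^(m+n) a^(y + 3^n x) *)
Definition bsmul (s t : BSp) : BSp :=
  ((s.1 + t.1)%N, (t.2 + (3 ^ t.1)%N%:Z * s.2)%R).

Definition bpow (m : nat) (A : {fset int}) : {fset BSp} :=
  [fset ((m, x) : BSp) | x in A].

Definition sqset (S : {fset BSp}) : {fset BSp} :=
  [fset bsmul s t | s in S, t in S].

(* Main.v *)
Require Import Defs.
From mathcomp Require Import all_boot all_order all_algebra.
From mathcomp Require Import finmap.
From mathcomp Require Import zify ring lra.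
Set Implicit Arguments. Unset Strict Implicit. Unset Printing Implicit Defensive.
Import Order.TTheory GRing.Theory Num.Theory.
Local Open Scope fset_scope.
Local Open Scope ring_scope.

Definition ssum (X Y : {fset int}) : {fset int} := [fset x + y | x in X, y in Y].
Definition scl (c : int) (X : {fset int}) : {fset int} := [fset c * x | x in X].

Lemma card_img (f : int -> int) (A : {fset int}) :
  {in A &, injective f} -> #|` [fset f x | x in A]| = #|` A|.
Proof. move=> h. by rewrite card_in_imfset. Qed.

Lemma card_disj (K : choiceType) (X Y Z : {fset K}) : X `<=` Z -> Y `<=` Z ->
  (forall z, z \in X -> z \notin Y) -> (#|` X| + #|` Y| <= #|` Z|)%N.
Proof.
move=> hx hy hd.
have -> : X `&` Y = fset0 -> (#|` X| + #|` Y| = #|` X `|` Y|)%N.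
  by move=> h; rewrite -cardfsUI h cardfs0 addn0.
  apply: fsubset_leq_card; by rewrite fsubUset hx hy.
apply/fsetP=> z; rewrite in_fsetI in_fset0.
by case hz: (z \in X) => //=; apply/negbTE/hd.
Qed.

Lemma ex_max (X : {fset int}) : X != fset0 -> exists2 x, x \in X & forall y, y \in X -> y <= x.
Proof.
case/fset0Pn=> x0 hx0.
pose s := enum_fset X.
have: forall s : seq int, s != [::] -> exists2 x, x \in s & forall y, y \in s -> y <= x.
  elim=> // a [|b s'] IH _.
    by exists a; rewrite ?mem_seq1 // => y; rewrite mem_seq1 => /eqP ->.
  have [c hc hcm] := IH isT.
  case: (lerP a c) => hac.
    exists c; first by rewrite in_cons hc orbT.
    by move=> y; rewrite in_cons => /orP [/eqP ->|/hcm].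
  exists a; first by rewrite in_cons eqxx.
  move=> y; rewrite in_cons => /orP [/eqP ->//|/hcm h]; lia.
move=> /(_ (enum_fset X)) [].
  apply/eqP => h; move: hx0; rewrite /in_mem /= /pred_of_finset h.
  done.
by move=> x hx hm; exists x => // y hy; apply: hm.
Qed.

Lemma ex_min (X : {fset int}) : X != fset0 -> exists2 x, x \in X & forall y, y \in X -> x <= y.
Proof.
move=> hX.
have hX' : [fset - x | x in X] != fset0.
  case/fset0Pn: hX => x hx; apply/fset0Pn; exists (- x); exact: in_imfset.
have [x hx hm] := ex_max hX'.
exists (- x).
  by case/imfsetP: hx => /= z hz ->; rewrite opprK.
move=> y hy; have := hm (- y) (in_imfset _ _ hy); lia.
Qed.

Lemma ssumP X Y z : reflect (exists2 x, x \in X & exists2 y, y \in Y & z = x + y) (z \in ssum X Y).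
Proof. exact: imfset2P. Qed.

Lemma mem_ssum X Y x y : x \in X -> y \in Y -> x + y \in ssum X Y.
Proof. by move=> hx hy; apply/ssumP; exists x => //; exists y. Qed.

Lemma sclP c X z : reflect (exists2 x, x \in X & z = c * x) (z \in scl c X).
Proof. exact: imfsetP. Qed.

Lemma mem_scl c X x : x \in X -> c * x \in scl c X.
Proof. by move=> hx; apply/sclP; exists x. Qed.

Lemma card_scl c X : c != 0 -> #|` scl c X| = #|` X|.
Proof. move=> hc; apply: card_img => x y _ _; exact: mulfI. Qed.

Lemma sumB X Y : X != fset0 -> Y != fset0 -> (#|` X| + #|` Y| <= #|` ssum X Y| + 1)%N.
Proof.
move=> hX hY.
have [xm hxm hxM] := ex_max hX; have [ym hym hym'] := ex_min hY.
pose P := [fset xm + y | y in Y]; pose Q := [fset x + ym | x in X].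
have cP : #|` P| = #|` Y| by apply: card_img => a b _ _; exact: addrI.
have cQ : #|` Q| = #|` X| by apply: card_img => a b _ _; exact: addIr.
have hU : (#|` P `|` Q| <= #|` ssum X Y|)%N.
  apply: fsubset_leq_card; apply/fsubsetP => z; rewrite in_fsetU.
  case/orP => /imfsetP [w hw ->]; exact: mem_ssum.
have hI : (#|` P `&` Q| <= 1)%N.
  rewrite -(cardfs1 (xm + ym)); apply: fsubset_leq_card; apply/fsubsetP => z.
  rewrite in_fsetI => /andP [/imfsetP [y hy ->] /imfsetP [x hx /= e]].
  rewrite in_fset1; apply/eqP.
  have := hxM x hx; have := hym' y hy; lia.
have := cardfsUI P Q; rewrite cP cQ; lia.
Qed.

Lemma in_sep (A : {fset int}) (P : pred int) x : (x \in [fset y in A | P y]) = (x \in A) && P x.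
Proof. by rewrite !inE. Qed.

Lemma card_split (A : {fset int}) (P : pred int) :
  #|` A| = (#|` [fset x in A | P x]| + #|` [fset x in A | ~~ P x]|)%N.
Proof.
rewrite -cardfsUI.
have -> : [fset x in A | P x] `&` [fset x in A | ~~ P x] = fset0.
  apply/fsetP => z; rewrite in_fsetI !in_sep in_fset0; by case: (P z); rewrite ?andbF.
have -> : [fset x in A | P x] `|` [fset x in A | ~~ P x] = A.
  apply/fsetP => z; rewrite in_fsetU !in_sep; by case: (P z); rewrite ?andbT ?andbF ?orbF.
by rewrite cardfs0 addn0.
Qed.

Lemma card_le_inj (f : int -> int) (X Z : {fset int}) :
  {in X &, injective f} -> (forall x, x \in X -> f x \in Z) -> (#|` X| <= #|` Z|)%N.
Proof.
move=> hi hm; rewrite -(card_img hi); apply: fsubset_leq_card; apply/fsubsetP => z.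
by case/imfsetP => x hx ->; apply: hm.
Qed.

Lemma dv_shift (l u v q : int) : (l %| u)%Z -> v = u + l * q -> (l %| v)%Z.
Proof. case/dvdzP => p -> ->; apply/dvdzP; exists (p + q); ring. Qed.

Lemma dv_shift' (l u v q : int) : ~~ (l %| u)%Z -> v = u + l * q -> ~~ (l %| v)%Z.
Proof.
move=> h e; apply/negP => hv; move/negP: h; apply; apply: (dv_shift (q := - q)) hv _.
rewrite e; ring.
Qed.

Lemma ssum_split (l : int) (A B : {fset int}) (a : int) :
  a \in A -> B != fset0 ->
  [fset x in A | ~~ (l %| x - a)%Z] != fset0 ->
  (forall y y', y \in B -> y' \in B -> (l %| y - y')%Z) ->
  (#|` A| + 2 * #|` B| <= #|` ssum A B| + 2)%N.
Proof.
move=> ha hB hA2 hBd.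
pose A1 := [fset x in A | (l %| x - a)%Z]; pose A2 := [fset x in A | ~~ (l %| x - a)%Z].
have hA1 : A1 != fset0 by apply/fset0Pn; exists a; rewrite in_sep ha subrr dvdz0.
have e : #|` A| = (#|` A1| + #|` A2|)%N by exact: (card_split A (fun x => (l %| x - a)%Z)).
have h1 := sumB hA1 hB; have h2 := @sumB A2 B hA2 hB.
have : (#|` ssum A1 B| + #|` ssum A2 B| <= #|` ssum A B|)%N.
  apply: card_disj.
  - apply/fsubsetP => z /ssumP [x hx [y hy ->]]; apply: mem_ssum => //.
    by move: hx; rewrite in_sep => /andP [].
  - apply/fsubsetP => z /ssumP [x hx [y hy ->]]; apply: mem_ssum => //.
    by move: hx; rewrite in_sep => /andP [].
  move=> z /ssumP [x1 hx1 [y1 hy1 ->]]; apply/negP => /ssumP [x2 hx2 [y2 hy2 ee]].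
  move: hx1 hx2; rewrite !in_sep => /andP [_ d1] /andP [_ d2].
  have /dvdzP [q hq] := hBd _ _ hy1 hy2.
  move/negP: d2; apply; apply: (dv_shift (q := q)) d1 _.
  have : x2 = x1 + y1 - y2 by rewrite ee; ring.
  move=> ->; rewrite -[y1](subrK y2) hq; ring.
lia.
Qed.

Definition dsc (l c : int) (A : {fset int}) : {fset int} := [fset ((x - c) %/ l)%Z | x in A].

Section Dsc.
Variables (l c : int) (A : {fset int}).
Hypothesis hl : l != 0.
Hypothesis hd : forall x, x \in A -> (l %| x - c)%Z.

Lemma dsc_eq x : x \in A -> c + l * ((x - c) %/ l)%Z = x.
Proof. move=> hx; rewrite mulrC divzK ?hd //; ring. Qed.

Lemma dscP x' : (x' \in dsc l c A) = (c + l * x' \in A).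
Proof.
apply/imfsetP/idP => [[x hx ->]|h]; first by rewrite dsc_eq.
exists (c + l * x') => //; rewrite addrAC subrr add0r mulKz //.
Qed.

Lemma card_dsc : #|` dsc l c A| = #|` A|.
Proof.
apply: card_img => x y hx hy e.
by rewrite -(dsc_eq hx) -(dsc_eq hy) e.
Qed.

Lemma dsc_diam K x' y' : 2 <= l ->
  (forall x y, x \in A -> y \in A -> x - y <= K.+1%:Z) ->
  x' \in dsc l c A -> y' \in dsc l c A -> x' - y' <= K%:Z.
Proof.
move=> h2 hK; rewrite !dscP => hx hy.
have := hK _ _ hx hy.
have -> : c + l * x' - (c + l * y') = l * (x' - y') by ring.
move=> h; nia.
Qed.

End Dsc.

Lemma diam0 (A : {fset int}) : (forall x y, x \in A -> y \in A -> x - y <= 0%N%:Z) -> (#|` A| <= 1)%N.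
Proof.
case: (boolP (A == fset0)) => [/eqP -> | /fset0Pn [a ha]] h; first by rewrite cardfs0.
rewrite -(cardfs1 a); apply: fsubset_leq_card; apply/fsubsetP => x hx.
rewrite in_fset1; apply/eqP; have := h _ _ hx ha; have := h _ _ ha hx; lia.
Qed.

Lemma ne_card (A : {fset int}) : A != fset0 -> (1 <= #|` A|)%N.
Proof. by rewrite cardfs_gt0. Qed.

Lemma mem_card (A : {fset int}) x : x \in A -> (1 <= #|` A|)%N.
Proof. by move=> hx; rewrite cardfs_gt0; apply/fset0Pn; exists x. Qed.

Lemma lamL (l : int) : 2 <= l -> forall K (A : {fset int}), A != fset0 ->
  (forall x y, x \in A -> y \in A -> x - y <= K%:Z) ->
  (3 * #|` A| <= #|` ssum A (scl l A)| + 2)%N.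
Proof.
move=> hl K; elim/ltn_ind: K => K IH A hA hK.
have hl0 : l != 0 by lia.
have hsA : scl l A != fset0 by rewrite -cardfs_gt0 card_scl // cardfs_gt0.
have csA := card_scl A hl0.
have [a ha] := fset0Pn _ hA.
case: (boolP ([fset x in A | ~~ (l %| x - a)%Z] == fset0)) => hsplit; last first.
  have := ssum_split ha hsA hsplit.
  have hB : forall y y', y \in scl l A -> y' \in scl l A -> (l %| y - y')%Z.
    move=> y y' /sclP [x _ ->] /sclP [x' _ ->]; apply/dvdzP; exists (x - x'); ring.
  move/(_ hB); lia.
have hd : forall x, x \in A -> (l %| x - a)%Z.
  move=> x hx; apply/negPn/negP => hn; move/eqP: hsplit => /fsetP /(_ x).
  by rewrite in_sep hx hn in_fset0.
case: K IH hK => [|K] IH hK.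
  have := diam0 hK; have := mem_card (mem_ssum ha (mem_scl l ha)); lia.
pose A' := dsc l a A.
have cA' : #|` A'| = #|` A| := @card_dsc l a A hd.
have hA' : A' != fset0 by rewrite -cardfs_gt0 cA' cardfs_gt0.
have := IH K (ltnSn K) A' hA' (fun x y => @dsc_diam l a A hl0 hd K x y hl hK).
have : (#|` ssum A' (scl l A')| <= #|` ssum A (scl l A)|)%N.
  apply: (card_le_inj (f := fun z => a + l * a + l * z)).
    by move=> x y _ _ e; apply: (mulfI hl0); apply: (addrI (a + l * a)).
  move=> z /ssumP [x hx [y /sclP [y0 hy0 ->] ->]].
  move: hx hy0; rewrite !(@dscP l a A hl0 hd) => hx hy0.
  have -> : a + l * a + l * (x + l * y0) = (a + l * x) + l * (a + l * y0) by ring.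
  by apply: mem_ssum => //; apply: mem_scl.
rewrite cA'; lia.
Qed.

Definition F0 (l : int) (M N : {fset int}) : nat :=
  (#|` ssum M M| + #|` ssum M N `|` ssum N (scl l M)| + #|` ssum N (scl l N)|)%N.

Lemma main0 (l : int) : 2 <= l -> forall K (M N : {fset int}), M != fset0 -> N != fset0 ->
  (4 <= #|` M| + #|` N|)%N ->
  (forall x y, x \in M -> y \in M -> x - y <= K%:Z) ->
  (forall x y, x \in N -> y \in N -> x - y <= K%:Z) ->
  (7 * (#|` M| + #|` N|) <= 2 * F0 l M N + 12)%N.
Proof.
move=> hl K; elim/ltn_ind: K => K IH M N hM hN h4 hKM hKN.
have hl0 : l != 0 by lia.
rewrite /F0.
have hsM : scl l M != fset0 by rewrite -cardfs_gt0 card_scl // cardfs_gt0.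
have csM := card_scl M hl0.
have L2 := lamL hl hN hKN.
have B0 := sumB hM hM.
have B1 := sumB hN hsM.
have hU : (#|` ssum N (scl l M)| <= #|` ssum M N `|` ssum N (scl l M)|)%N.
  by apply: fsubset_leq_card; rewrite fsubsetUr.
have [nu hnu] := fset0Pn _ hN.
have hBM : forall y y', y \in scl l M -> y' \in scl l M -> (l %| y - y')%Z.
  move=> y y' /sclP [x _ ->] /sclP [x' _ ->]; apply/dvdzP; exists (x - x'); ring.
case: (boolP ([fset x in N | ~~ (l %| x - nu)%Z] == fset0)) => hsplit; last first.
  have := ssum_split hnu hsM hsplit hBM; lia.
have hdN : forall x, x \in N -> (l %| x - nu)%Z.
  move=> x hx; apply/negPn/negP => hn; move/eqP: hsplit => /fsetP /(_ x).
  by rewrite in_sep hx hn in_fset0.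
pose P := fun x => x + nu \in ssum N (scl l M).
pose D := [fset x in M | P x]; pose D' := [fset x in M | ~~ P x].
have eD : #|` M| = (#|` D| + #|` D'|)%N by exact: (card_split M P).
have hU2 : (#|` ssum N (scl l M)| + #|` D'| <= #|` ssum M N `|` ssum N (scl l M)|)%N.
  rewrite -(@card_img (fun x => x + nu) D'); last by move=> x y _ _; apply: addIr.
  apply: card_disj.
  - by rewrite fsubsetUr.
  - apply/fsubsetP => z /imfsetP [x hx ->]; rewrite in_fsetU; apply/orP; left.
    by apply: mem_ssum => //; move: hx; rewrite in_sep => /andP [].
  - move=> z hz; apply/negP => /imfsetP [x hx e]; move: hx; rewrite in_sep => /andP [_].
    by rewrite /P -e hz.
case: (leqP (2 * #|` D|) (#|` M| + #|` N| + 4)) => hdsmall.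
  lia.
have hDM : forall x, x \in D -> x \in M by move=> x; rewrite in_sep => /andP [].
have hD0 : forall x, x \in D -> (l %| x)%Z.
  move=> x; rewrite in_sep => /andP [_ /ssumP [y hy [w /sclP [z hz ->] e]]].
  apply: (dv_shift (q := z) (hdN _ hy)); rewrite -[x](addrK nu) e; ring.
have hDne : D != fset0 by rewrite -cardfs_gt0; lia.
have [x0 hx0] := fset0Pn _ hDne.
have hBD : forall y y', y \in D -> y' \in D -> (l %| y - y')%Z.
  by move=> y y' hy hy'; apply: rpredB; apply: hD0.
case: (boolP ([fset x in M | ~~ (l %| x - x0)%Z] == fset0)) => hsplitM; last first.
  have := ssum_split (hDM _ hx0) hDne hsplitM hBD.
  have : (#|` ssum M D| <= #|` ssum M M|)%N.
    apply: fsubset_leq_card; apply/fsubsetP => z /ssumP [x hx [y hy ->]].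
    by apply: mem_ssum => //; apply: hDM.
  lia.
have hdM : forall x, x \in M -> (l %| x - 0)%Z.
  move=> x hx; rewrite subr0.
  have : (l %| x - x0)%Z.
    apply/negPn/negP => hn; move/eqP: hsplitM => /fsetP /(_ x).
    by rewrite in_sep hx hn in_fset0.
  move=> h; rewrite -[x](subrK x0); apply: rpredD => //; exact: hD0.
case: K IH hKM hKN => [|K] IH hKM hKN.
  have := diam0 hKM; have := diam0 hKN; lia.
pose M' := dsc l 0 M; pose N' := dsc l nu N.
have cM' : #|` M'| = #|` M| := @card_dsc l 0 M hdM.
have cN' : #|` N'| = #|` N| := @card_dsc l nu N hdN.
have hM' : M' != fset0 by rewrite -cardfs_gt0 cM' cardfs_gt0.
have hN' : N' != fset0 by rewrite -cardfs_gt0 cN' cardfs_gt0.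
have := IH K (ltnSn K) M' N' hM' hN' ltac:(rewrite cM' cN'; lia)
  (fun x y => @dsc_diam l 0 M hl0 hdM K x y hl hKM)
  (fun x y => @dsc_diam l nu N hl0 hdN K x y hl hKN).
have PM := @dscP l 0 M hl0 hdM; have PN := @dscP l nu N hl0 hdN.
have c1 : (#|` ssum M' M'| <= #|` ssum M M|)%N.
  apply: (card_le_inj (f := fun z => l * z)).
    by move=> x y _ _; apply: mulfI.
  move=> z /ssumP [x hx [y hy ->]]; move: hx hy; rewrite !PM !add0r => hx hy.
  by rewrite mulrDr; apply: mem_ssum.
have c2 : (#|` ssum M' N' `|` ssum N' (scl l M')| <= #|` ssum M N `|` ssum N (scl l M)|)%N.
  apply: (card_le_inj (f := fun z => nu + l * z)).
    by move=> x y _ _ e; apply: (mulfI hl0); apply: (addrI nu).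
  move=> z; rewrite !in_fsetU => /orP [] /ssumP [x hx [y hy ->]]; apply/orP.
    left; move: hx hy; rewrite PM PN add0r => hx hy.
    have -> : nu + l * (x + y) = l * x + (nu + l * y) by ring.
    exact: mem_ssum.
  right; case/sclP: hy => w hw ->; move: hx hw; rewrite PM PN add0r => hx hw.
  have -> : nu + l * (x + l * w) = (nu + l * x) + l * (l * w) by ring.
  by apply: mem_ssum => //; apply: mem_scl.
have c3 : (#|` ssum N' (scl l N')| <= #|` ssum N (scl l N)|)%N.
  apply: (card_le_inj (f := fun z => nu + l * nu + l * z)).
    by move=> x y _ _ e; apply: (mulfI hl0); apply: (addrI (nu + l * nu)).
  move=> z /ssumP [x hx [y /sclP [w hw ->] ->]]; move: hx hw; rewrite !PN => hx hw.
  have -> : nu + l * nu + l * (x + l * w) = (nu + l * x) + l * (nu + l * w) by ring.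
  by apply: mem_ssum => //; apply: mem_scl.
rewrite /F0 cM' cN'; lia.
Qed.

Lemma card_bpow a X : #|` bpow a X| = #|` X|.
Proof. by rewrite card_in_imfset // => x y _ _ [->]. Qed.

Lemma bpowP a X (p : BSp) : (p \in bpow a X) = (p.1 == a) && (p.2 \in X).
Proof.
apply/imfsetP/andP => [[x hx ->]|[/eqP h1 h2]] /=; first by rewrite eqxx.
by exists p.2 => //; case: p h1 h2 => /= ? ? ->.
Qed.

Lemma bpow_disj a b X Y : a <> b -> forall p, p \in bpow a X -> p \notin bpow b Y.
Proof.
move=> hab p; rewrite !bpowP => /andP [/eqP h _]; apply/negP => /andP [/eqP h' _].
by apply: hab; rewrite -h -h'.
Qed.

Lemma card_bpowU a b X Y : a <> b -> #|` bpow a X `|` bpow b Y| = (#|` X| + #|` Y|)%N.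
Proof.
move=> hab; rewrite -(card_bpow a X) -(card_bpow b Y) -cardfsUI.
have -> : bpow a X `&` bpow b Y = fset0.
  apply/fsetP => p; rewrite in_fsetI in_fset0.
  case hp: (p \in bpow a X) => //=; apply/negbTE; exact: (@bpow_disj a b X Y hab p hp).
by rewrite cardfs0 addn0.
Qed.

Lemma card3 (Z : {fset BSp}) a b c X Y W : a <> b -> a <> c -> b <> c ->
  bpow a X `<=` Z -> bpow b Y `<=` Z -> bpow c W `<=` Z ->
  (#|` X| + #|` Y| + #|` W| <= #|` Z|)%N.
Proof.
move=> hab hac hbc hX hY hW.
rewrite -(card_bpow a X) -(card_bpow b Y) -(card_bpow c W).
have h1 : (#|` bpow a X| + #|` bpow b Y| <= #|` bpow a X `|` bpow b Y|)%N.
  apply: card_disj; [exact: fsubsetUl| exact: fsubsetUr| exact: bpow_disj].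
apply: leq_trans (leq_add h1 (leqnn _)) _.
apply: card_disj; first by rewrite fsubUset hX hY.
  exact: hW.
move=> p; rewrite in_fsetU => /orP [] hp; exact: bpow_disj hp.
Qed.

Lemma scl1 X : scl 1 X = X.
Proof.
apply/fsetP => z; apply/sclP/idP => [[x hx ->]|hz]; first by rewrite mul1r.
by exists z; rewrite ?mul1r.
Qed.

Lemma sq_sub (m n : nat) (M N : {fset int}) :
  let S := bpow m M `|` bpow n N in
  [/\ bpow (m + m) (ssum M (scl (3 ^ m)%N%:Z M)) `<=` sqset S,
      bpow (m + n) (ssum M (scl (3 ^ m)%N%:Z N) `|` ssum N (scl (3 ^ n)%N%:Z M)) `<=` sqset S &
      bpow (n + n) (ssum N (scl (3 ^ n)%N%:Z N)) `<=` sqset S].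
Proof.
move=> S.
have hU : forall x, x \in M -> ((m, x) : BSp) \in S.
  by move=> x hx; rewrite in_fsetU bpowP /= eqxx hx.
have hV : forall x, x \in N -> ((n, x) : BSp) \in S.
  by move=> x hx; rewrite in_fsetU !bpowP /= eqxx hx orbT.
have key : forall s t, s \in S -> t \in S -> bsmul s t \in sqset S.
  move=> s t hs ht; apply/imfset2P; exists s; first exact: hs. exists t; first exact: ht. done.
split; apply/fsubsetP => p; rewrite bpowP => /andP [/eqP h1].
- case/ssumP => x hx [y /sclP [w hw ->] e].
  have -> : p = bsmul (m, w) (m, x) by case: p h1 e => /= ? ? -> ->; rewrite /bsmul /=.
  by apply: key; [apply: hU|apply: hU].
- rewrite in_fsetU => /orP [] /ssumP [x hx [y /sclP [w hw ->] e]].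
    have -> : p = bsmul (n, w) (m, x).
      by case: p h1 e => /= ? ? -> ->; rewrite /bsmul /= addnC.
    by apply: key; [apply: hV|apply: hU].
  have -> : p = bsmul (m, w) (n, x) by case: p h1 e => /= ? ? -> ->; rewrite /bsmul /=.
  by apply: key; [apply: hU|apply: hV].
- case/ssumP => x hx [y /sclP [w hw ->] e].
  have -> : p = bsmul (n, w) (n, x) by case: p h1 e => /= ? ? -> ->; rewrite /bsmul /=.
  by apply: key; [apply: hV|apply: hV].
Qed.

Lemma ex_diam (A : {fset int}) : exists K : nat, forall x y, x \in A -> y \in A -> x - y <= K%:Z.
Proof.
case: (boolP (A == fset0)) => [/eqP -> | hA]; first by exists 0%N => x y; rewrite in_fset0.
have [a ha hma] := ex_max hA; have [b hb hmb] := ex_min hA.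
exists (absz (a - b)) => x y hx hy; have := hma x hx; have := hmb y hy; lia.
Qed.

Lemma pow3 n : (0 < n)%N -> 2 <= (3 ^ n)%N%:Z.
Proof. case: n => // n _; rewrite expnS; have := expn_gt0 3 n; lia. Qed.

Lemma natrat (s q : nat) : (7 * s <= 2 * q + 12)%N ->
  ((q%:R : rat) >= (7%:R / 2%:R) * s%:R - 6%:R)%R.
Proof.
rewrite -(ler_nat rat) natrD !natrM => h.
have -> : (7%:R / 2%:R : rat) * s%:R - 6%:R = (7%:R * s%:R + 12%:R) / 2%:R - 12%:R by field.
lra.
Qed.

Theorem lemma2p1_aux (m n : nat) (M N : {fset int}) :
  (m < n)%N -> M != fset0 -> N != fset0 ->
  let S := bpow m M `|` bpow n N in
  (4 <= #|` S|)%N ->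
  ((#|` sqset S|)%:R >= (7%:R / 2%:R) * (#|` S|)%:R - 6%:R :> rat)%R.
Proof.
move=> hmn hM hN S h4; apply: natrat.
have [s0 s1 s2] := sq_sub m n M N.
have cS : #|` S| = (#|` M| + #|` N|)%N by apply: card_bpowU; lia.
have H := card3 (a := (m + m)%N) (b := (m + n)%N) (c := (n + n)%N) ltac:(lia) ltac:(lia) ltac:(lia) s0 s1 s2.
rewrite cS in h4 *.
have hl := pow3 (n := n) ltac:(lia).
have [KM hKM] := ex_diam M; have [KN hKN] := ex_diam N.
have hKM' : forall x y, x \in M -> y \in M -> x - y <= (KM + KN)%N%:Z.
  move=> x y hx hy; have := hKM x y hx hy; lia.
have hKN' : forall x y, x \in N -> y \in N -> x - y <= (KM + KN)%N%:Z.
  move=> x y hx hy; have := hKN x y hx hy; lia.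
case: (posnP m) => [m0|mpos].
  rewrite /S m0 expn0 !scl1 in H *.
  have := main0 hl hM hN h4 hKM' hKN'; rewrite /F0; lia.
have hmu := pow3 mpos.
have L1 := lamL hmu hM hKM; have L2 := lamL hl hN hKN.
have hsM : scl (3 ^ n)%N%:Z M != fset0 by rewrite -cardfs_gt0 card_scl ?cardfs_gt0 //; lia.
have B1 := sumB hN hsM.
have hU : (#|` ssum N (scl (3 ^ n)%N%:Z M)| <= #|` ssum M (scl (3 ^ m)%N%:Z N) `|` ssum N (scl (3 ^ n)%N%:Z M)|)%N.
  by apply: fsubset_leq_card; rewrite fsubsetUr.
rewrite card_scl in B1; last by lia.
rewrite /S; lia.
Qed.

Local Close Scope ring_scope.

Theorem lemma2p1 (m n : nat) (M N : {fset int}) :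
  (m < n)%N -> M != fset0 -> N != fset0 ->
  let S := bpow m M `|` bpow n N in
  (4 <= #|` S|)%N ->
  ((#|` sqset S|)%:R >= (7%:R / 2%:R) * (#|` S|)%:R - 6%:R :> rat)%R.
Proof. exact: lemma2p1_aux. Qed.
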